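(* Let $F\colon\mathsf{Nom}\to\mathsf{Nom}$ be $FX=1+\mathbb{A}\times X+[\mathbb{A}]X$. The initial $F$-algebra is the nominal set $\overline{\mathbb{A}}^*/{=_\alpha}$ of bar strings modulo $\alpha$-equivalence with the structure $\iota$ given by $\iota( * )=[\varepsilon]_\alpha$, $\iota(a,[w]_\alpha)=[aw]_\alpha$ and $\iota(\langle a\rangle[w]_\alpha)=[\mathord{|}a\,w]_\alpha$.
   Context: Fix a countably infinite set $\mathbb{A}$ of names; $\mathsf{Nom}$ is the category of nominal sets (sets with an action of the group of finite permutations of $\mathbb{A}$ in which each element $x$ has a least finite support $\mathrm{supp}(x)$; $a$ is fresh for $x$, $a\#x$, if $a\notin\mathrm{supp}(x)$) and equivariant maps. $[\mathbb{A}]X$ is the quotient of $\mathbb{A}\times X$ by $(a,x)\sim(b,y)$ iff $(a\,c)\cdot x=(b\,c)\cdot y$ for some fresh $c$, classes written $\langle a\rangle x$. Bar strings are finite words over $\overline{\mathbb{A}}=\mathbb{A}\cup\{\mathord{|}a: a\in\mathbb{A}\}$, with pointwise action; $\mathord{|}a$ binds $a$ to its right. $=_\alpha$ is the least equivalence relation on $\overline{\mathbb{A}}^*$ with $x\,\mathord{|}a\,v=_\alpha x\,\mathord{|}b\,w$ for all $a,b\in\mathbb{A}$, $x,v,w\in\overline{\mathbb{A}}^*$ with $\langle a\rangle v=\langle b\rangle w$ in $[\mathbb{A}]\overline{\mathbb{A}}^*$ (equivalently: $a=b$ and $v=w$, or $b\#v$ and $(a\,b)\cdot v=w$). $[w]_\alpha$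 is the class of $w$; $\overline{\mathbb{A}}^*/{=_\alpha}$ is a nominal set with $\pi\cdot[w]_\alpha=[\pi\cdot w]_\alpha$. *)

(* Defs.v *)
(* Nominal sets over the atoms A := nat. *)
From Stdlib Require Import List Arith ClassicalEpsilon.
From Stdlib Require Import Relations.Relation_Operators.
Import ListNotations.

Record perm := Perm {
  pf : nat -> nat;
  pinv : nat -> nat;
  pfK : forall a, pinv (pf a) = a;
  pinvK : forall a, pf (pinv a) = a;
  pfin : exists l : list nat, forall a, ~ In a l -> pf a = a }.

Definition pid : perm.
Proof.
  refine (Perm (fun a => a) (fun a => a) (fun a => eq_refl) (fun a => eq_refl) _).
  exists nil; auto.
Defined.

Definition pcomp (p q : perm) : perm.
Proof.
  refine (Perm (fun a => pf p (pf q a)) (fun a => pinv q (pinv p a)) _ _ _).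
  - intro a; rewrite pfK, pfK; reflexivity.
  - intro a; rewrite pinvK, pinvK; reflexivity.
  - destruct (pfin p) as [l Hl]; destruct (pfin q) as [m Hm].
    exists (l ++ m); intros a Ha.
    rewrite Hm, Hl; auto; intro H; apply Ha; apply in_or_app; auto.
Defined.

Definition swapf (a b x : nat) : nat :=
  if Nat.eqb x a then b else if Nat.eqb x b then a else x.

Lemma swapfK a b x : swapf a b (swapf a b x) = x.
Proof.
  unfold swapf.
  destruct (Nat.eqb x a) eqn:Ea; destruct (Nat.eqb x b) eqn:Eb;
  repeat match goal with
  | H : Nat.eqb _ _ = true |- _ => apply Nat.eqb_eq in H; subst
  | H : Nat.eqb _ _ = false |- _ => apply Nat.eqb_neq in H
  end;
  repeat (match goal with |- context [Nat.eqb ?u ?v] =>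
            destruct (Nat.eqb_spec u v) end; subst); congruence.
Qed.

Definition pswap (a b : nat) : perm.
Proof.
  refine (Perm (swapf a b) (swapf a b) (swapfK a b) (swapfK a b) _).
  exists [a; b]; intros x Hx; unfold swapf.
  destruct (Nat.eqb_spec x a); [subst; simpl in Hx; tauto|].
  destruct (Nat.eqb_spec x b); [subst; simpl in Hx; tauto|]; reflexivity.
Defined.

Section Nominal.
Variable X : Type.
Variable act : perm -> X -> X.

Definition supports (S : list nat) (x : X) : Prop :=
  forall p : perm, (forall a, In a S -> pf p a = a) -> act p x = x.

Definition least_supp (S : list nat) (x : X) : Prop :=
  supports S x /\ forall S', supports S' x -> incl S S'.

Definition fresh (a : nat) (x : X) : Prop :=
  exists S, least_supp S x /\ ~ In a S.

Definition is_nominal : Prop :=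
  (forall x, act pid x = x) /\
  (forall p q x, act (pcomp p q) x = act p (act q x)) /\
  (forall x, exists S, least_supp S x).

Definition abs_rel (u v : nat * X) : Prop :=
  let (a, x) := u in let (b, y) := v in
  exists c, c <> a /\ c <> b /\ fresh c x /\ fresh c y /\
            act (pswap a c) x = act (pswap b c) y.
End Nominal.

Arguments supports {X} act S x.
Arguments least_supp {X} act S x.
Arguments fresh {X} act a x.
Arguments is_nominal {X} act.
Arguments abs_rel {X} act u v.

Definition equivariant {X Y : Type} (actX : perm -> X -> X) (actY : perm -> Y -> Y)
  (f : X -> Y) : Prop :=
  forall p x, f (actX p x) = actY p (f x).

Definition quot {X : Type} (R : X -> X -> Prop) : Type :=
  { P : X -> Prop | exists x, P = R x }.

Definition cls {X : Type} (R : X -> X -> Prop) (x : X) : quot R :=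
  exist _ (R x) (ex_intro _ x eq_refl).

Definition rep {X : Type} {R : X -> X -> Prop} (c : quot R) : X :=
  proj1_sig (constructive_indefinite_description _ (proj2_sig c)).

Definition absT (X : Type) (act : perm -> X -> X) : Type := quot (abs_rel act).

Definition abs_cls {X : Type} (act : perm -> X -> X) (a : nat) (x : X) : absT X act :=
  cls (abs_rel act) (a, x).

Definition FT (X : Type) (act : perm -> X -> X) : Type :=
  (unit + (nat * X) + absT X act)%type.

Definition actF {X : Type} (act : perm -> X -> X) (p : perm) (u : FT X act) : FT X act :=
  match u with
  | inl (inl t) => inl (inl t)
  | inl (inr (a, x)) => inl (inr (pf p a, act p x))
  | inr c => let (a, x) := rep c in inr (abs_cls act (pf p a) (act p x))
  end.

Definition Fmap {X Y : Type} (actX : perm -> X -> X) (actY : perm -> Y -> Y)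
  (h : X -> Y) (u : FT X actX) : FT Y actY :=
  match u with
  | inl (inl t) => inl (inl t)
  | inl (inr (a, x)) => inl (inr (a, h x))
  | inr c => let (a, x) := rep c in inr (abs_cls actY a (h x))
  end.

Definition is_Fhom {X Y : Type} (actX : perm -> X -> X) (actY : perm -> Y -> Y)
  (alpha : FT X actX -> X) (beta : FT Y actY -> Y) (h : X -> Y) : Prop :=
  forall u, h (alpha u) = beta (Fmap actX actY h u).

Definition is_initial_Falg {X : Type} (actX : perm -> X -> X)
  (alpha : FT X actX -> X) : Prop :=
  is_nominal actX /\ equivariant (actF actX) actX alpha /\
  forall (Y : Type) (actY : perm -> Y -> Y) (beta : FT Y actY -> Y),
    is_nominal actY -> equivariant (actF actY) actY beta ->
    exists h : X -> Y,
      equivariant actX actY h /\ is_Fhom actX actY alpha beta h /\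
      forall h' : X -> Y, equivariant actX actY h' ->
        is_Fhom actX actY alpha beta h' -> forall x, h' x = h x.

Inductive barletter : Type :=
| Nm (a : nat)
| Bd (a : nat).    (* |a, binding a to its right *)

Definition bact (p : perm) (l : barletter) : barletter :=
  match l with Nm a => Nm (pf p a) | Bd a => Bd (pf p a) end.

Definition wact (p : perm) (w : list barletter) : list barletter := map (bact p) w.

Definition alpha_step (w1 w2 : list barletter) : Prop :=
  exists x a b v w, w1 = x ++ Bd a :: v /\ w2 = x ++ Bd b :: w /\
    abs_cls wact a v = abs_cls wact b w.

Definition alpha_eq : list barletter -> list barletter -> Prop :=
  clos_refl_sym_trans _ alpha_step.

Definition BarQ : Type := quot alpha_eq.

Definition bcls (w : list barletter) : BarQ := cls alpha_eq w.

Definition BarQ_act (p : perm) (c : BarQ) : BarQ := bcls (wact p (rep c)).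

Definition iota (u : FT BarQ BarQ_act) : BarQ :=
  match u with
  | inl (inl _) => bcls nil
  | inl (inr (a, c)) => bcls (Nm a :: rep c)
  | inr d => let (a, c) := rep d in bcls (Bd a :: rep c)
  end.

(* Main.v *)
Require Import Defs.
From Stdlib Require Import List Arith Lia ClassicalEpsilon FunctionalExtensionality PropExtensionality ProofIrrelevance.
From Stdlib Require Import Relations.Relation_Operators.
Import ListNotations.

Ltac swapsimpl := unfold swapf in *;
  repeat (match goal with |- context [Nat.eqb ?u ?v] => is_var u; is_var v; destruct (Nat.eqb_spec u v) end; cbn beta iota);
  subst; try congruence; try lia.

Lemma perm_ext (p q : perm) : (forall a, pf p a = pf q a) -> p = q.
Proof.
  destruct p as [f g fK gK fin], q as [f' g' fK' gK' fin']; simpl; intro H.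
  assert (f = f') by (apply functional_extensionality; auto). subst f'.
  assert (g = g').
  { apply functional_extensionality; intro a.
    transitivity (g (f (g' a))); [rewrite gK'; auto | apply fK]. }
  subst g'. f_equal; apply proof_irrelevance.
Qed.

Definition pinvp (p : perm) : perm.
Proof.
  refine (Perm (pinv p) (pf p) (pinvK p) (pfK p) _).
  destruct (pfin p) as [l Hl]; exists l; intros a Ha.
  transitivity (pinv p (pf p a)); [rewrite (Hl a Ha); auto | apply pfK].
Defined.

Lemma pf_inj (p : perm) a b : pf p a = pf p b -> a = b.
Proof. intro H. rewrite <- (pfK p a), <- (pfK p b), H. auto. Qed.

Lemma sum_ge l x : In x l -> x <= fold_right plus 0 l.
Proof. induction l; simpl; intros H; [tauto|]. destruct H; subst; [lia|]. specialize (IHl H); lia. Qed.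

Lemma ex_fresh (l : list nat) : exists c, ~ In c l.
Proof. exists (S (fold_right plus 0 l)). intro H. apply sum_ge in H. lia. Qed.

Lemma quot_eq {T} (R : T -> T -> Prop) (c d : quot R) : proj1_sig c = proj1_sig d -> c = d.
Proof. destruct c as [P HP], d as [Q HQ]; simpl; intro; subst; f_equal; apply proof_irrelevance. Qed.

Lemma cls_eq {T} (R : T -> T -> Prop) u v :
  (forall x y, R x y -> R y x) -> (forall x y z, R x y -> R y z -> R x z) -> R u v -> cls R u = cls R v.
Proof.
  intros Sy Tr H. apply quot_eq; simpl.
  apply functional_extensionality; intro z; apply propositional_extensionality; split; eauto.
Qed.

Lemma cls_inv {T} (R : T -> T -> Prop) u v : (forall x, R x x) -> cls R u = cls R v -> R u v.
Proof. intros Rf H. apply (f_equal (@proj1_sig _ _)) in H; simpl in H. rewrite H; auto. Qed.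

Lemma rep_spec {T} (R : T -> T -> Prop) (c : quot R) : proj1_sig c = R (rep c).
Proof. unfold rep. destruct (constructive_indefinite_description _ _); auto. Qed.

Lemma rep_cls {T} (R : T -> T -> Prop) x : (forall x, R x x) -> R x (rep (cls R x)).
Proof. intro Rf. pose proof (rep_spec R (cls R x)) as H; simpl in H. rewrite H; auto. Qed.

Lemma quot_surj {T} (R : T -> T -> Prop) (c : quot R) : exists x, c = cls R x.
Proof. destruct c as [P [x Hx]]; exists x; apply quot_eq; simpl; auto. Qed.

Section Gen.
Variable X : Type.
Variable act : perm -> X -> X.
Hypothesis Hn : is_nominal act.

Lemma act_id x : act pid x = x. Proof. apply Hn. Qed.
Lemma act_comp p q x : act (pcomp p q) x = act p (act q x). Proof. apply Hn. Qed.

Lemma supp_agree S x p q : supports act S x -> (forall a, In a S -> pf p a = pf q a) -> act p x = act q x.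
Proof.
  intros HS Hpq.
  assert (E : p = pcomp q (pcomp (pinvp q) p)) by (apply perm_ext; intro a; simpl; rewrite pinvK; auto).
  rewrite E, act_comp. f_equal. apply HS. intros a Ha; simpl. rewrite Hpq by auto. apply pfK.
Qed.

Lemma fresh_iff c x : fresh act c x <-> forall S, least_supp act S x -> ~ In c S.
Proof.
  split.
  - intros [S0 [HS0 Hc]] S HS Hin. apply Hc. apply (proj2 HS S0 (proj1 HS0)); auto.
  - intros H. destruct (proj2 (proj2 Hn) x) as [S HS]. exists S; split; auto.
Qed.

Lemma ex_fresh_for (l : list nat) (xs : list X) : exists c, ~ In c l /\ Forall (fresh act c) xs.
Proof.
  assert (exists L, forall x, In x xs -> forall S, least_supp act S x -> incl S L) as [L HL].
  { induction xs as [|x xs IH].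
    - exists nil; simpl; tauto.
    - destruct IH as [L HL]. destruct (proj2 (proj2 Hn) x) as [S HS].
      exists (S ++ L); intros y [<-|Hy] S' HS'.
      + intros a Ha. apply in_or_app; left. apply (proj2 HS' S (proj1 HS)); auto.
      + intros a Ha. apply in_or_app; right. eapply HL; eauto. }
  destruct (ex_fresh (l ++ L)) as [c Hc]. exists c; split.
  - intro; apply Hc, in_or_app; auto.
  - apply Forall_forall; intros x Hx. apply fresh_iff; intros S HS Hin.
    apply Hc, in_or_app; right. eapply HL; eauto.
Qed.

Lemma abs_change a b x y c1 c :
  c1 <> a -> c1 <> b -> fresh act c1 x -> fresh act c1 y ->
  act (pswap a c1) x = act (pswap b c1) y ->
  c <> a -> c <> b -> fresh act c x -> fresh act c y ->
  act (pswap a c) x = act (pswap b c) y.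
Proof.
  intros h1 h2 [Sx [HSx Fx]] [Sy [HSy Fy]] E h3 h4 Gx Gy.
  rewrite fresh_iff in Gx, Gy. specialize (Gx _ HSx); specialize (Gy _ HSy).
  assert (A1 : act (pswap a c) x = act (pcomp (pswap c c1) (pswap a c1)) x).
  { apply (supp_agree Sx x _ _ (proj1 HSx)). intros z Hz; simpl.
    assert (z <> c) by (intro; subst; auto). assert (z <> c1) by (intro; subst; auto). swapsimpl. }
  assert (A2 : act (pswap b c) y = act (pcomp (pswap c c1) (pswap b c1)) y).
  { apply (supp_agree Sy y _ _ (proj1 HSy)). intros z Hz; simpl.
    assert (z <> c) by (intro; subst; auto). assert (z <> c1) by (intro; subst; auto). swapsimpl. }
  rewrite A1, A2, !act_comp, E; auto.
Qed.

Lemma abs_refl u : abs_rel act u u.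
Proof.
  destruct u as [a x]. destruct (ex_fresh_for [a] [x]) as [c [Hc Hf]].
  inversion Hf; subst. exists c; simpl in Hc; intuition.
Qed.

Lemma abs_sym u v : abs_rel act u v -> abs_rel act v u.
Proof. destruct u as [a x], v as [b y]; intros [c H]; exists c; intuition. Qed.

Lemma abs_trans u v w : abs_rel act u v -> abs_rel act v w -> abs_rel act u w.
Proof.
  destruct u as [a x], v as [b y], w as [d z]; intros [c1 H1] [c2 H2].
  destruct (ex_fresh_for [a;b;d] [x;y;z]) as [c [Hc Hf]].
  inversion Hf as [|? ? F1 Hf1]; inversion Hf1 as [|? ? F2 Hf2]; inversion Hf2 as [|? ? F3 _]; subst.
  simpl in Hc. exists c. repeat split; try intuition.
  transitivity (act (pswap b c) y).
  - apply (abs_change a b x y c1 c); intuition.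
  - apply (abs_change b d y z c2 c); intuition.
Qed.

Lemma abs_cls_eq a x b y : abs_rel act (a, x) (b, y) -> abs_cls act a x = abs_cls act b y.
Proof. apply cls_eq; [apply abs_sym | apply abs_trans]. Qed.

Lemma abs_cls_inv a x b y : abs_cls act a x = abs_cls act b y -> abs_rel act (a, x) (b, y).
Proof. apply cls_inv, abs_refl. Qed.

Lemma abs_rep (d : absT X act) a x : d = abs_cls act a x -> abs_rel act (rep d) (a, x).
Proof. intros ->. unfold abs_cls. apply abs_sym, (rep_cls (abs_rel act)), abs_refl. Qed.

Lemma supports_act S x p : supports act S x -> supports act (map (pf p) S) (act p x).
Proof.
  intros HS q Hq.
  assert (E : pcomp q p = pcomp p (pcomp (pinvp p) (pcomp q p)))
    by (apply perm_ext; intro a; simpl; rewrite pinvK; auto).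
  rewrite <- act_comp, E, act_comp. f_equal. apply HS. intros a Ha; simpl.
  rewrite Hq by (apply in_map; auto). apply pfK.
Qed.

Lemma fresh_act c x p : fresh act c x -> fresh act (pf p c) (act p x).
Proof.
  intros [S [HS Hc]]. apply fresh_iff; intros T HT Hin.
  apply (proj2 HT _ (supports_act S x p (proj1 HS))) in Hin.
  apply in_map_iff in Hin as [c' [E Hc']]. apply pf_inj in E; subst; auto.
Qed.

Lemma abs_rel_act a x b y p : abs_rel act (a, x) (b, y) -> abs_rel act (pf p a, act p x) (pf p b, act p y).
Proof.
  intros [c (h1 & h2 & F1 & F2 & E)]. exists (pf p c). repeat split.
  - intro H; apply pf_inj in H; auto.
  - intro H; apply pf_inj in H; auto.
  - apply fresh_act; auto.
  - apply fresh_act; auto.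
  - assert (G : forall z, pcomp (pswap (pf p z) (pf p c)) p = pcomp p (pswap z c)).
    { intro z; apply perm_ext; intro w; simpl. unfold swapf.
      destruct (Nat.eqb_spec w z) as [->|n1]; [rewrite Nat.eqb_refl; auto|].
      destruct (Nat.eqb_spec (pf p w) (pf p z)) as [e|_]; [apply pf_inj in e; congruence|].
      destruct (Nat.eqb_spec w c) as [->|n2]; [rewrite Nat.eqb_refl; auto|].
      destruct (Nat.eqb_spec (pf p w) (pf p c)) as [e|_]; [apply pf_inj in e; congruence|auto]. }
    rewrite <- !act_comp, !G, !act_comp, E; auto.
Qed.

End Gen.

Section Transfer.
Variables (X Y : Type) (actX : perm -> X -> X) (actY : perm -> Y -> Y).
Hypotheses (HX : is_nominal actX) (HY : is_nominal actY).
Variable h : X -> Y.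
Hypothesis Hh : equivariant actX actY h.

Lemma fresh_transfer c x : fresh actX c x -> fresh actY c (h x).
Proof.
  intros [S [HS Hc]]. apply fresh_iff; auto; intros T HT Hin. apply Hc.
  apply (proj2 HT S); auto. intros p Hp. rewrite <- Hh. f_equal. apply (proj1 HS); auto.
Qed.

Lemma abs_transfer a x b y : abs_rel actX (a, x) (b, y) -> abs_rel actY (a, h x) (b, h y).
Proof.
  intros [c (h1 & h2 & F1 & F2 & E)]. exists c. repeat split; auto; try apply fresh_transfer; auto.
  rewrite <- !Hh, E; auto.
Qed.
End Transfer.
Definition lname (l : barletter) := match l with Nm a => a | Bd a => a end.
Definition atoms (w : list barletter) : list nat := map lname w.
Fixpoint fn (w : list barletter) : list nat :=
  match w with
  | [] => []
  | Nm a :: u => a :: fn u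
  | Bd a :: u => filter (fun x => negb (Nat.eqb x a)) (fn u)
  end.

Lemma wact_id w : wact pid w = w.
Proof. induction w as [|[a|a] w IH]; simpl; f_equal; auto. Qed.

Lemma wact_comp p q w : wact (pcomp p q) w = wact p (wact q w).
Proof. induction w as [|[a|a] w IH]; simpl; f_equal; auto. Qed.

Lemma wact_agree p q w : (forall a, In a (atoms w) -> pf p a = pf q a) -> wact p w = wact q w.
Proof.
  induction w as [|[a|a] w IH]; simpl; intros H; auto; f_equal; auto; rewrite H; auto.
Qed.

Lemma map_fix {T} (f : T -> T) (w : list T) : map f w = w -> forall l, In l w -> f l = l.
Proof.
  induction w as [|x w IH]; simpl; intros H l Hl; [tauto|]. injection H as H1 H2.
  destruct Hl as [<-|Hl]; auto.
Qed.

Lemma lists_least w : least_supp wact (atoms w) w.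
Proof.
  split.
  - intros p Hp. rewrite <- (wact_id w) at 2. apply wact_agree. intros a Ha; simpl; auto.
  - intros S' HS' a Ha. destruct (in_dec Nat.eq_dec a S') as [|Hn]; auto. exfalso.
    destruct (ex_fresh (a :: S')) as [b Hb].
    assert (E : wact (pswap a b) w = w).
    { apply HS'. intros x Hx; simpl. unfold swapf.
      destruct (Nat.eqb_spec x a); [subst; contradiction|].
      destruct (Nat.eqb_spec x b); [subst; simpl in Hb; tauto|auto]. }
    unfold atoms in Ha. apply in_map_iff in Ha as [l [<- Hl]].
    pose proof (map_fix _ _ E l Hl) as F.
    destruct l as [x|x]; simpl in F; injection F; unfold swapf; rewrite Nat.eqb_refl; intro;
      subst; simpl in Hb; tauto.
Qed.

Lemma wnom : is_nominal wact.
Proof.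
  split; [exact wact_id|split; [exact wact_comp|]]. intro w; exists (atoms w); apply lists_least.
Qed.

Lemma wfresh c w : fresh wact c w <-> ~ In c (atoms w).
Proof.
  split.
  - intros H. rewrite fresh_iff in H by apply wnom. apply H, lists_least.
  - intros H. exists (atoms w); split; auto; apply lists_least.
Qed.

Lemma fn_Bd a u x : In x (fn (Bd a :: u)) <-> x <> a /\ In x (fn u).
Proof.
  simpl. rewrite filter_In. destruct (Nat.eqb_spec x a); simpl; intuition.
Qed.

Lemma fn_atoms w x : In x (fn w) -> In x (atoms w).
Proof.
  induction w as [|[a|a] w IH]; simpl; auto.
  - intuition.
  - rewrite filter_In; intuition.
Qed.

Lemma fn_wact p w y : In (pf p y) (fn (wact p w)) <-> In y (fn w).
Proof.
  induction w as [|[a|a] w IH]; simpl; [tauto| |].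
  - split; intros [H|H];
      [left; apply pf_inj in H; auto | right; apply IH; auto | left; subst; auto | right; apply IH; auto].
  - rewrite !filter_In, IH.
    destruct (Nat.eqb_spec (pf p y) (pf p a)) as [e|]; destruct (Nat.eqb_spec y a); simpl;
      try (apply pf_inj in e); subst; intuition.
Qed.

Lemma fn_wact' p w x : In x (fn (wact p w)) <-> In (pinv p x) (fn w).
Proof. rewrite <- (fn_wact p w (pinv p x)), pinvK. tauto. Qed.

Lemma wabs_iff a v b w : abs_rel wact (a, v) (b, w) <->
  exists c, c <> a /\ c <> b /\ ~ In c (atoms v) /\ ~ In c (atoms w) /\
            wact (pswap a c) v = wact (pswap b c) w.
Proof.
  simpl. split; intros [c H]; exists c; rewrite !wfresh in *; auto.
Qed.

Lemma alpha_refl u : alpha_eq u u. Proof. apply rst_refl. Qed.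
Lemma alpha_sym u v : alpha_eq u v -> alpha_eq v u. Proof. apply rst_sym. Qed.
Lemma alpha_trans u v w : alpha_eq u v -> alpha_eq v w -> alpha_eq u w. Proof. apply rst_trans. Qed.

Lemma alpha_app x u v : alpha_eq u v -> alpha_eq (x ++ u) (x ++ v).
Proof.
  induction 1 as [u v H| | |]; [|apply rst_refl|apply rst_sym; auto|eapply rst_trans; eauto].
  apply rst_step. destruct H as (x' & a & b & v' & w' & -> & -> & E).
  exists (x ++ x'), a, b, v', w'. rewrite <- !app_assoc. auto.
Qed.

Lemma alpha_cons l u v : alpha_eq u v -> alpha_eq (l :: u) (l :: v).
Proof. apply (alpha_app [l]). Qed.

Lemma alpha_wact p u v : alpha_eq u v -> alpha_eq (wact p u) (wact p v).
Proof.
  induction 1 as [u v H| | |]; [|apply rst_refl|apply rst_sym; auto|eapply rst_trans; eauto].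
  apply rst_step. destruct H as (x' & a & b & v' & w' & -> & -> & E).
  exists (wact p x'), (pf p a), (pf p b), (wact p v'), (wact p w').
  split; [apply map_app|split; [apply map_app|]].
  apply abs_cls_eq; [apply wnom|]. apply abs_rel_act; [apply wnom|].
  apply abs_cls_inv; [apply wnom|auto].
Qed.

Lemma fn_app_cong x y1 y2 : (forall z, In z (fn y1) <-> In z (fn y2)) ->
  forall z, In z (fn (x ++ y1)) <-> In z (fn (x ++ y2)).
Proof.
  intros H. induction x as [|[a|a] x IH]; simpl; auto.
  - intro z; rewrite IH; tauto.
  - intro z; rewrite !filter_In, IH; tauto.
Qed.

Lemma fn_step u v : alpha_step u v -> forall z, In z (fn u) <-> In z (fn v).
Proof.
  intros (x & a & b & v' & w' & -> & -> & E). apply fn_app_cong.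
  apply abs_cls_inv in E; [|apply wnom]. apply wabs_iff in E as (c & h1 & h2 & F1 & F2 & E).
  assert (G1 : forall y, In y (fn w') <-> In (swapf a c (swapf b c y)) (fn v')).
  { intro y. rewrite <- (fn_wact (pswap b c) w' y), <- E, fn_wact'. simpl. tauto. }
  assert (c1 : ~ In c (fn v')) by (intro Hc; apply F1, fn_atoms; auto).
  assert (c2 : ~ In c (fn w')) by (intro Hc; apply F2, fn_atoms; auto).
  intro z. rewrite !fn_Bd, G1.
  destruct (Nat.eqb_spec a b) as [<-|nab].
  - assert (K : forall y, swapf a c (swapf a c y) = y) by apply swapfK. rewrite K; tauto.
  - assert (Hb : ~ In b (fn v')).
    { intro Hb. apply c2, G1. replace (swapf a c (swapf b c c)) with b by swapsimpl. auto. }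
    assert (Ha : forall y, In y (fn v') -> y <> a -> y <> b /\ y <> c).
    { intros y Hy Hya; split; intro; subst; auto. }
    unfold swapf.
    destruct (Nat.eqb_spec z b); destruct (Nat.eqb_spec z c); destruct (Nat.eqb_spec z a); subst; simpl;
    repeat (match goal with |- context [Nat.eqb ?u ?v] => destruct (Nat.eqb_spec u v) end; cbn beta iota);
    subst; try congruence; split; intros [H1 H2]; try (split; [congruence|]); try tauto;
    try (exfalso; apply c1; auto; fail); try (exfalso; apply Hb; auto; fail); try congruence.
Qed.

Lemma fn_alpha u v : alpha_eq u v -> forall z, In z (fn u) <-> In z (fn v).
Proof.
  induction 1 as [u v H|u|u v H IH|u v w H1 IH1 H2 IH2]; intro z;
    [apply fn_step; auto|tauto|rewrite IH; tauto|rewrite IH1; auto].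
Qed.

Lemma alphaL0 c d u : ~ In d (atoms u) -> alpha_eq (Bd c :: u) (Bd d :: wact (pswap c d) u).
Proof.
  intros Hd. apply rst_step. exists [], c, d, u, (wact (pswap c d) u). split; [auto|split; [auto|]].
  apply abs_cls_eq; [apply wnom|]. apply wabs_iff.
  destruct (ex_fresh (c :: d :: atoms u ++ atoms (wact (pswap c d) u))) as [e He].
  simpl in He. exists e. repeat split; try (intro; subst; tauto).
  - intro; apply He; right; right; apply in_or_app; auto.
  - intro; apply He; right; right; apply in_or_app; auto.
  - rewrite <- wact_comp. apply wact_agree. intros y Hy; simpl.
    assert (y <> d) by (intro; subst; tauto).
    assert (y <> e) by (intro; subst; apply He; right; right; apply in_or_app; auto).
    assert (e <> c) by (intro; subst; tauto). assert (e <> d) by (intro; subst; tauto).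
    swapsimpl.
Qed.

Lemma rename_avoid n : forall v, length v <= n -> forall c, ~ In c (fn v) ->
  exists v', alpha_eq v v' /\ ~ In c (atoms v').
Proof.
  induction n as [|n IH]; intros v Hl c Hc.
  - destruct v; simpl in Hl; [|lia]. exists []; split; [apply alpha_refl|simpl; auto].
  - destruct v as [|[b|b] u].
    + exists []; split; [apply alpha_refl|simpl; auto].
    + simpl in Hl, Hc. destruct (IH u ltac:(lia) c ltac:(tauto)) as [u' [H1 H2]].
      exists (Nm b :: u'); split; [apply alpha_cons; auto|simpl; intuition].
    + simpl in Hl. destruct (Nat.eq_dec b c) as [->|nbc].
      * destruct (ex_fresh (c :: atoms u)) as [d Hd]. simpl in Hd.
        assert (Hc' : ~ In c (fn (wact (pswap c d) u))).
        { rewrite fn_wact'. simpl. unfold swapf. rewrite Nat.eqb_refl. intro H. apply Hd; right.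
          apply fn_atoms; auto. }
        assert (Hlen : length (wact (pswap c d) u) <= n) by (unfold wact; rewrite length_map; lia).
        destruct (IH _ Hlen c Hc') as [u' [H1 H2]].
        exists (Bd d :: u'). split.
        -- eapply alpha_trans; [apply (alphaL0 c d); tauto|apply alpha_cons; auto].
        -- simpl. intros [H|H]; [subst; tauto|auto].
      * assert (Hc' : ~ In c (fn u)) by (intro H; apply Hc, fn_Bd; auto).
        destruct (IH u ltac:(lia) c Hc') as [u' [H1 H2]].
        exists (Bd b :: u'); split; [apply alpha_cons; auto|simpl; intuition].
Qed.

Lemma alphaL a c v : ~ In c (fn v) -> alpha_eq (Bd a :: v) (Bd c :: wact (pswap a c) v).
Proof.
  intros Hc. destruct (rename_avoid (length v) v (le_n _) c Hc) as [v' [H1 H2]].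
  eapply alpha_trans; [apply alpha_cons, H1|].
  eapply alpha_trans; [apply alphaL0, H2|].
  apply alpha_cons, alpha_wact, alpha_sym, H1.
Qed.

Lemma alpha_supports w : forall p, (forall a, In a (fn w) -> pf p a = a) -> alpha_eq (wact p w) w.
Proof.
  induction w as [|[a|a] u IH]; intros p Hp.
  - apply alpha_refl.
  - simpl in Hp. change (alpha_eq (Nm (pf p a) :: wact p u) (Nm a :: u)).
    rewrite Hp by auto. apply alpha_cons, IH. auto.
  - change (alpha_eq (Bd (pf p a) :: wact p u) (Bd a :: u)).
    destruct (ex_fresh (a :: pf p a :: atoms u ++ atoms (wact p u))) as [c Hc]. simpl in Hc.
    assert (c1 : ~ In c (atoms u)) by (intro; apply Hc; right; right; apply in_or_app; auto).
    assert (c2 : ~ In c (atoms (wact p u))) by (intro; apply Hc; right; right; apply in_or_app; auto).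
    pose (q := pcomp (pswap a c) (pcomp (pswap (pf p a) c) p)).
    assert (Hq : forall y, In y (fn u) -> pf q y = y).
    { intros y Hy. assert (y <> c) by (intro; subst; apply c1, fn_atoms; auto).
      unfold q; simpl. destruct (Nat.eq_dec y a) as [->|nya].
      - assert (pf p a <> c) by (intro; apply Hc; auto). assert (a <> c) by (intro; apply Hc; auto).
        set (pa := pf p a) in *; clearbody pa. swapsimpl.
      - assert (E : pf p y = y) by (apply Hp, fn_Bd; auto). rewrite E.
        assert (y <> pf p a) by (intro Hy'; apply nya; apply (pf_inj p); congruence).
        set (pa := pf p a) in *; clearbody pa. swapsimpl. }
    eapply alpha_trans; [apply alphaL0, c2|].
    eapply alpha_trans; [|apply alpha_sym, alphaL0, c1].
    apply alpha_cons.
    replace (wact (pswap (pf p a) c) (wact p u)) with (wact (pswap a c) (wact q u)).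
    + apply alpha_wact, IH, Hq.
    + rewrite <- !wact_comp. apply wact_agree. intros y _. unfold q; simpl. apply swapfK.
Qed.

Lemma bcls_eq u v : alpha_eq u v -> bcls u = bcls v.
Proof. apply cls_eq; [apply alpha_sym|apply alpha_trans]. Qed.

Lemma bcls_inv u v : bcls u = bcls v -> alpha_eq u v.
Proof. apply cls_inv, alpha_refl. Qed.

Lemma rep_bcls w : alpha_eq w (rep (bcls w)).
Proof. apply (rep_cls alpha_eq), alpha_refl. Qed.

Lemma BarQ_act_bcls p w : BarQ_act p (bcls w) = bcls (wact p w).
Proof. unfold BarQ_act. apply bcls_eq, alpha_wact, alpha_sym, rep_bcls. Qed.

Lemma BarQ_surj (c : BarQ) : exists w, c = bcls w.
Proof. apply quot_surj. Qed.

Lemma BarQ_least w : least_supp BarQ_act (fn w) (bcls w).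
Proof.
  split.
  - intros p Hp. rewrite BarQ_act_bcls. apply bcls_eq, alpha_supports; auto.
  - intros S' HS' a Ha. destruct (in_dec Nat.eq_dec a S') as [|Hn]; auto. exfalso.
    destruct (ex_fresh (a :: S' ++ atoms w)) as [b Hb]. simpl in Hb.
    assert (E : BarQ_act (pswap a b) (bcls w) = bcls w).
    { apply HS'. intros x Hx; simpl. unfold swapf.
      destruct (Nat.eqb_spec x a); [subst; contradiction|].
      destruct (Nat.eqb_spec x b); [subst; exfalso; apply Hb; right; apply in_or_app; auto|auto]. }
    rewrite BarQ_act_bcls in E. apply bcls_inv in E.
    apply (fn_wact (pswap a b)) in Ha. apply (fn_alpha _ _ E) in Ha.
    simpl in Ha. unfold swapf in Ha. rewrite Nat.eqb_refl in Ha.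
    apply Hb; right; apply in_or_app; right; apply fn_atoms; auto.
Qed.

Lemma BarQ_nom : is_nominal BarQ_act.
Proof.
  split; [|split].
  - intro c; destruct (BarQ_surj c) as [w ->]. rewrite BarQ_act_bcls, wact_id; auto.
  - intros p q c; destruct (BarQ_surj c) as [w ->]. rewrite !BarQ_act_bcls, wact_comp; auto.
  - intro c; destruct (BarQ_surj c) as [w ->]. exists (fn w); apply BarQ_least.
Qed.

Lemma BarQ_fresh c w : fresh BarQ_act c (bcls w) <-> ~ In c (fn w).
Proof.
  split.
  - intros H. rewrite fresh_iff in H by apply BarQ_nom. apply H, BarQ_least.
  - intros H. exists (fn w); split; auto; apply BarQ_least.
Qed.

Lemma iota3 a w : iota (inl (inr (a, bcls w))) = bcls (Nm a :: w).
Proof. simpl. apply bcls_eq, alpha_cons, alpha_sym, rep_bcls. Qed.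

Lemma iota4 a w : iota (inr (abs_cls BarQ_act a (bcls w))) = bcls (Bd a :: w).
Proof.
  simpl. assert (H := abs_rep BarQ BarQ_act BarQ_nom (abs_cls BarQ_act a (bcls w)) a (bcls w) eq_refl).
  revert H. destruct (rep (abs_cls BarQ_act a (bcls w))) as [a' c']. intro H.
  destruct (BarQ_surj c') as [v ->].
  destruct H as (c & h1 & h2 & F1 & F2 & E).
  rewrite BarQ_fresh in F1, F2. rewrite !BarQ_act_bcls in E. apply bcls_inv in E.
  apply bcls_eq.
  eapply alpha_trans; [apply alpha_cons, alpha_sym, rep_bcls|].
  eapply alpha_trans; [apply (alphaL a' c), F1|].
  eapply alpha_trans; [apply alpha_cons, E|].
  apply alpha_sym, alphaL, F2.
Qed.

Lemma iota_equiv : equivariant (actF BarQ_act) BarQ_act iota.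
Proof.
  intros p u. destruct u as [[[]|[a c]]|d].
  - simpl. rewrite BarQ_act_bcls. reflexivity.
  - destruct (BarQ_surj c) as [w ->]. simpl actF. rewrite BarQ_act_bcls, !iota3, BarQ_act_bcls. reflexivity.
  - unfold actF. change (iota (inr d)) with (let (a, c) := rep d in bcls (Bd a :: rep c)).
    destruct (rep d) as [a c]. destruct (BarQ_surj c) as [w ->].
    rewrite BarQ_act_bcls, iota4, BarQ_act_bcls. apply bcls_eq.
    change (alpha_eq (Bd (pf p a) :: wact p w) (Bd (pf p a) :: wact p (rep (bcls w)))).
    apply alpha_cons, alpha_wact, rep_bcls.
Qed.

Section Init.
Variables (Y : Type) (actY : perm -> Y -> Y) (beta : FT Y actY -> Y).
Hypotheses (HY : is_nominal actY) (Hb : equivariant (actF actY) actY beta).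

Fixpoint hstr (w : list barletter) : Y :=
  match w with
  | [] => beta (inl (inl tt))
  | Nm a :: u => beta (inl (inr (a, hstr u)))
  | Bd a :: u => beta (inr (abs_cls actY a (hstr u)))
  end.

Lemma hstr_equiv : equivariant wact actY hstr.
Proof.
  intros p w. induction w as [|[a|a] u IH]; simpl.
  - rewrite <- Hb. reflexivity.
  - rewrite IH, <- Hb. reflexivity.
  - rewrite IH, <- Hb. unfold actF.
    assert (H := abs_rep Y actY HY (abs_cls actY a (hstr u)) a (hstr u) eq_refl).
    revert H. destruct (rep (abs_cls actY a (hstr u))) as [a' x']. intro H.
    f_equal; f_equal. apply abs_cls_eq; auto. apply abs_rel_act; auto. apply abs_sym; auto.
Qed.

Lemma hstr_app x y1 y2 : hstr y1 = hstr y2 -> hstr (x ++ y1) = hstr (x ++ y2).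
Proof. intro H; induction x as [|[a|a] x IH]; simpl; rewrite ?IH; auto. Qed.

Lemma hstr_alpha u v : alpha_eq u v -> hstr u = hstr v.
Proof.
  induction 1 as [u v H|u|u v H IH|u v w H1 IH1 H2 IH2]; auto; [|congruence].
  destruct H as (x & a & b & v' & w' & -> & -> & E). apply hstr_app. simpl.
  f_equal; f_equal. apply abs_cls_eq; auto.
  apply (abs_transfer _ _ wact actY HY hstr hstr_equiv).
  apply abs_cls_inv; [apply wnom|auto].
Qed.

Lemma hq_bcls w : hstr (rep (bcls w)) = hstr w.
Proof. symmetry; apply hstr_alpha, rep_bcls. Qed.
End Init.

Theorem proposition3p19 :
  (* the action and iota are well defined by the stated equations *)
  (forall p w, BarQ_act p (bcls w) = bcls (wact p w)) /\
  iota (inl (inl tt)) = bcls nil /\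
  (forall a w, iota (inl (inr (a, bcls w))) = bcls (Nm a :: w)) /\
  (forall a w, iota (inr (abs_cls BarQ_act a (bcls w))) = bcls (Bd a :: w)) /\
  (* (Abar*/=alpha, iota) is the initial F-algebra in Nom *)
  is_initial_Falg BarQ_act iota.
Proof.
  split; [exact BarQ_act_bcls|]. split; [reflexivity|]. split; [exact iota3|]. split; [exact iota4|].
  split; [exact BarQ_nom|]. split; [exact iota_equiv|].
  intros Y actY beta HY Hb.
  exists (fun c => hstr Y actY beta (rep c)). split; [|split].
  - intros p c. destruct (BarQ_surj c) as [w ->].
    rewrite BarQ_act_bcls, !hq_bcls; auto. apply hstr_equiv; auto.
  - intros u. destruct u as [[[]|[a c]]|d].
    + unfold iota. rewrite hq_bcls; auto.
    + unfold iota. rewrite hq_bcls; auto.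
    + unfold iota, Fmap. destruct (rep d) as [a c]. rewrite hq_bcls; auto.
  - intros h' Eh' Fh' c. destruct (BarQ_surj c) as [w ->]. rewrite hq_bcls; auto.
    induction w as [|[a|a] u IH].
    + change (bcls nil) with (iota (inl (inl tt))). rewrite Fh'. reflexivity.
    + rewrite <- iota3, Fh'. simpl. rewrite IH. reflexivity.
    + rewrite <- iota4, Fh'. simpl hstr. unfold Fmap.
      assert (H := abs_rep BarQ BarQ_act BarQ_nom (abs_cls BarQ_act a (bcls u)) a (bcls u) eq_refl).
      revert H. destruct (rep (abs_cls BarQ_act a (bcls u))) as [a' c']. intro H.
      f_equal; f_equal. apply abs_cls_eq; auto.
      eapply abs_trans; auto;
        [apply (abs_transfer BarQ Y BarQ_act actY HY h' Eh' a' c' a (bcls u) H)|].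
      rewrite IH. apply abs_refl; auto.
Qed.
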